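(* Let $(G,c)$ be a W-state graph and let $G_m=(V(G),E_m(G))$ be the spanning subgraph consisting of all monochromatic edges. Then $G_m$ is the disjoint union of exactly two connected components, each of which is factor-critical.
   Context: Graphs may have parallel edges but no loops. A half-edge $2$-colouring $c$ of $G$ assigns to each pair $(e,w)$ with $w$ an endpoint of edge $e$ a colour in $\{0,1\}$ (0 = blue, 1 = red). An edge $e=uv$ is bichromatic if $c(e,u)\neq c(e,v)$ and monochromatic otherwise; $E_m(G)$ is the set of monochromatic edges; standing convention: monochromatic edges are blue at both ends. A graph is matching-covered if every edge lies in some perfect matching. A W-state graph is a half-edge $2$-coloured matching-covered graph $(G,c)$ in which every perfect matching contains exactly one bichromatic edge, and every vertex $v$ is incident with an edge $e$ with $c(e,v)=1$. A graph $F$ is factor-critical if $F-u$ has a perfect matching for every vertex $u$. *)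

(* Defs.v *)
(* Multigraphs with parallel edges: a finite vertex type V,
   a finite edge type E and an endpoint map  ends : E -> V * V.
   A half-edge 2-colouring is  c : E -> bool -> bool, where
   c e false = colour of the half-edge (e, (ends e).1) and
   c e true  = colour of the half-edge (e, (ends e).2);  false = blue (0), true = red (1). *)
From mathcomp Require Import all_boot.
Set Implicit Arguments. Unset Strict Implicit. Unset Printing Implicit Defensive.

Section Graphs.
Variables (V E : finType) (ends : E -> V * V).

Definition loopless : Prop := forall e : E, (ends e).1 != (ends e).2.

Definition endpoint (e : E) (v : V) : bool := ((ends e).1 == v) || ((ends e).2 == v).

Definition perfect_matching_on (S : {set V}) (M : {set E}) : bool :=
  [forall e in M, ((ends e).1 \in S) && ((ends e).2 \in S)] &&
  [forall v in S, #|[set e in M | endpoint e v]| == 1].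

Definition perfect_matching (M : {set E}) : bool := perfect_matching_on [set: V] M.

Definition matching_covered : Prop :=
  forall e : E, exists M : {set E}, perfect_matching M && (e \in M).

Variable c : E -> bool -> bool.

Definition bichromatic (e : E) : bool := c e false != c e true.
Definition monochromatic (e : E) : bool := ~~ bichromatic e.

Definition red_at (e : E) (v : V) : bool :=
  (((ends e).1 == v) && c e false) || (((ends e).2 == v) && c e true).

Definition W_state : Prop :=
  matching_covered /\
  (forall M : {set E}, perfect_matching M -> #|[set e in M | bichromatic e]| = 1) /\
  (forall v : V, exists e : E, red_at e v).

Definition mono_adj : rel V := fun x y =>
  [exists e, monochromatic e && ((ends e == (x, y)) || (ends e == (y, x)))].

(* the subgraph of G_m induced on A (whose edges are the monochromatic edges with
   both ends in A) is factor-critical *)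
Definition mono_factor_critical (A : {set V}) : Prop :=
  forall u, u \in A -> exists M : {set E},
    [forall e in M, monochromatic e] && perfect_matching_on (A :\ u) M.

End Graphs.

(* Main.v *)
Require Import Defs.
From mathcomp Require Import all_boot zify.
Set Implicit Arguments. Unset Strict Implicit. Unset Printing Implicit Defensive.

Section Proof.
Variables (V E : finType) (ends : E -> V * V) (c : E -> bool -> bool).
Hypothesis loopl : loopless ends.

Definition deg (M : {set E}) (x : V) : nat := #|[set e in M | endpoint ends e x]|.

Lemma degE (M : {set E}) x : deg M x = \sum_(e in M) endpoint ends e x.
Proof.
rewrite /deg -sum1dep_card big_mkcondr /=; apply: eq_bigr => e _.
by case: endpoint.
Qed.

Lemma degU g (M : {set E}) x : g \notin M -> deg (g |: M) x = endpoint ends g x + deg M x.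
Proof. by move=> gM; rewrite !degE big_setU1. Qed.

Lemma degD f (M : {set E}) x : f \in M -> deg M x = endpoint ends f x + deg (M :\ f) x.
Proof. by move=> fM; rewrite !degE (big_setD1 f). Qed.

Lemma deg_pos (M : {set E}) e x : e \in M -> endpoint ends e x -> 0 < deg M x.
Proof. by move=> eM ex; rewrite card_gt0; apply/set0Pn; exists e; rewrite inE eM. Qed.

Lemma deg_uniq (M : {set E}) e f x : deg M x <= 1 -> e \in M -> f \in M ->
  endpoint ends e x -> endpoint ends f x -> e = f.
Proof.
move/card_le1_eqP => H eM fM ex fx; apply: H; by rewrite inE ?eM ?fM ?ex ?fx.
Qed.

Lemma pm_deg (S : {set V}) (M : {set E}) : perfect_matching_on ends S M <-> forall x, deg M x = (x \in S).
Proof.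
split.
- case/andP => /forall_inP Hin /forall_inP Hd x.
  case: (boolP (x \in S)) => xS; first by apply/eqP; exact: Hd.
  apply/eqP; rewrite cards_eq0; apply/eqP/setP => e; rewrite !inE.
  apply/negbTE; apply/negP=> /andP[eM].
  case/andP: (Hin e eM); rewrite /endpoint => h1 h2 /orP[/eqP E1|/eqP E2].
    by move: xS; rewrite -E1 h1.
  by move: xS; rewrite -E2 h2.
- move=> H; apply/andP; split.
  + apply/forall_inP => e eM; apply/andP; split.
      have := deg_pos eM (_ : endpoint ends e (ends e).1).
      by rewrite H /endpoint eqxx; case: (_ \in S) => //; move/(_ isT).
    have := deg_pos eM (_ : endpoint ends e (ends e).2).
    by rewrite H /endpoint eqxx orbT; case: (_ \in S) => //; move/(_ isT).
  + apply/forall_inP => x xS; have := H x; rewrite /deg => ->; by rewrite xS.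
Qed.

Lemma sum_eq1 (S : {set V}) a : \sum_(x in S) (a == x : nat) = (a \in S).
Proof.
rewrite (eq_bigr (fun x => if a == x then 1 else 0)); last by move=> x _; case: (a == x).
rewrite -big_mkcondr /=.
case: (boolP (a \in S)) => aS.
  rewrite (big_pred1 a) // => x /=; rewrite eq_sym; case: eqP => [->|] /=; by rewrite ?aS ?andbF.
rewrite big_pred0 // => x; case: eqP => [<-|]; by rewrite ?(negbTE aS) ?andbF.
Qed.

Lemma parity (S T : {set V}) (M : {set E}) :
  (forall e, e \in M -> ((ends e).1 \in S) = ((ends e).2 \in S)) ->
  (forall x, deg M x = (x \in T)) -> ~~ odd #|S :&: T|.
Proof.
move=> Hcl Hdeg.
have ->: #|S :&: T| = \sum_(x in S) deg M x.
  rewrite (eq_bigr (fun x => if x \in T then 1 else 0)); last first.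
    by move=> x _; rewrite Hdeg; case: (x \in T).
  rewrite -big_mkcondr /= -sum1_card; apply: eq_bigl => x; by rewrite inE.
rewrite (eq_bigr (fun x => \sum_(e in M) endpoint ends e x)); last by move=> x _; rewrite degE.
rewrite exchange_big /= -dvdn2; apply: dvdn_sum => e eM.
have ne := loopl e.
rewrite (eq_bigr (fun x => ((ends e).1 == x : nat) + ((ends e).2 == x : nat))); last first.
  move=> x _; rewrite /endpoint; case: eqP => [<-|] //=; by rewrite eq_sym (negbTE ne).
by rewrite big_split /= !sum_eq1 (Hcl e eM) addnn dvdn2 odd_double.
Qed.


Definition oth (e : E) (z : V) : V := if (ends e).1 == z then (ends e).2 else (ends e).1.

Lemma endpoint_oth e z : endpoint ends e z ->
  forall x, endpoint ends e x = (x == z) || (x == oth e z).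
Proof.
rewrite /endpoint /oth => H x; case: (eqVneq (ends e).1 z) H => [<- _|ne /= /eqP <-];
  by rewrite (eq_sym (ends e).1 x) (eq_sym (ends e).2 x) // orbC.
Qed.

Lemma oth_neq e z : endpoint ends e z -> oth e z != z.
Proof.
have := loopl e; rewrite /endpoint /oth.
case: (eqVneq (ends e).1 z) => [<- H _|ne H /= /eqP Ez]; [by rewrite eq_sym | by rewrite -Ez].
Qed.

Lemma endpoint_othz e z : endpoint ends e z -> endpoint ends e (oth e z).
Proof. by move=> H; rewrite (endpoint_oth H) eqxx orbT. Qed.

Definition mono (M : {set E}) := [forall e in M, monochromatic c e].

Definition near (M : {set E}) u v :=
  [&& mono M, u != v & [forall x, deg M x == ((x != u) && (x != v))]].

Lemma near_sym M u v : near M u v -> near M v u.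
Proof.
case/and3P => H1 H2 /forallP H3; apply/and3P; split => //; first by rewrite eq_sym.
by apply/forallP => x; rewrite andbC; exact: H3.
Qed.

Lemma nearD M u v x : near M u v -> deg M x = (x != u) && (x != v).
Proof. by case/and3P => _ _ /forallP H; apply/eqP; exact: H. Qed.

Hypothesis noPM : forall M, mono M -> ~ (forall x, deg M x = 1).
Hypothesis H1 : forall w, exists z M, near M w z.

Lemma adjE u v : mono_adj ends c u v ->
  exists e, monochromatic c e /\ forall x, endpoint ends e x = (x == u) || (x == v).
Proof.
case/existsP => e /andP[em H]; exists e; split => // x.
rewrite /endpoint; case/orP: H => /eqP -> /=; rewrite (eq_sym u x) (eq_sym v x) //; by rewrite orbC.
Qed.

Lemma add_contra M u v : near M u v -> mono_adj ends c u v -> False.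
Proof.
move=> Hn /adjE [e [em He]].
have uv : u != v by case/and3P: Hn.
have eM : e \notin M.
  apply/negP => eM; have := deg_pos eM (_ : endpoint ends e u).
  by rewrite (nearD _ Hn) eqxx He eqxx; move/(_ isT).
apply: (noPM (M := e |: M)).
  apply/forall_inP => f /setU1P [-> //|fM].
  by case/and3P: Hn => /forall_inP H _ _; exact: H.
move=> x; rewrite degU // (nearD _ Hn) He.
case: (eqVneq x u) => [->|xu]; first by [].
by case: (eqVneq x v).
Qed.

Lemma monoS (M N : {set E}) : mono M -> N \subset M -> mono N.
Proof.
move=> /forall_inP H /subsetP S; apply/forall_inP => e eN; exact: H (S e eN).
Qed.

Lemma inner M u v w : near M u v -> deg M w = 1 ->
  (forall N z, near N w z -> (z != u) && (z != v)) -> False.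
Proof.
move=> Hn Mw Hcov.
have [z0 [N0 HN0]] := H1 w.
pose P := fun N => [exists z, near N w z].
have P0 : P N0 by apply/existsP; exists z0.
case: (arg_maxnP (fun N => #|M :&: N|) P0) => N /existsP[z HN] Hmax.
have /andP[zu zv] := Hcov N z HN.
have Mz : deg M z = 1 by rewrite (nearD _ Hn) zu zv.
have [g] : exists g, g \in [set e in M | endpoint ends e z].
  by apply/set0Pn; rewrite -card_gt0; rewrite /deg in Mz; rewrite Mz.
rewrite inE => /andP[gM gz].
set y := oth g z.
have Hg := endpoint_oth gz.
have yz : y != z by exact: oth_neq.
have wz : w != z by case/and3P: HN.
have gN : g \notin N.
  apply/negP => gN; have := deg_pos gN gz; by rewrite (nearD _ HN) eqxx andbF.
have monoN : mono N by case/and3P: HN.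
have monoM : mono M by case/and3P: Hn.
have gmono : monochromatic c g by move/forall_inP: monoM; apply.
have yw : y != w.
  apply/negP => /eqP yw; apply: (noPM (M := g |: N)).
    apply/forall_inP => f /setU1P [-> //|fN].
    by move/forall_inP: monoN; apply.
  move=> x; rewrite degU // (nearD _ HN) Hg -/y yw.
  case: (eqVneq x w) => [->|xw]; first by rewrite ?eqxx ?orbT /=.
  by case: (eqVneq x z).
have Ny : deg N y = 1 by rewrite (nearD _ HN) yw yz.
have [f] : exists f, f \in [set e in N | endpoint ends e y].
  by apply/set0Pn; rewrite -card_gt0; rewrite /deg in Ny; rewrite Ny.
rewrite inE => /andP[fN fy].
set t := oth f y.
have Hf := endpoint_oth fy.
have ty : t != y by exact: oth_neq.
have Nt : 0 < deg N t by apply: (deg_pos fN); rewrite Hf eqxx orbT.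
have tw : t != w by apply/negP => /eqP tw; move: Nt; rewrite (nearD _ HN) tw eqxx.
have tz : t != z by apply/negP => /eqP tz; move: Nt; rewrite (nearD _ HN) tz eqxx andbF.
have fM : f \notin M.
  apply/negP => fM.
  have My : deg M y <= 1 by rewrite (nearD _ Hn); case: (_ && _).
  have fg : f = g by apply: (deg_uniq My) => //; rewrite Hg eqxx orbT.
  by move: gN; rewrite -fg fN.
have gNf : g \notin N :\ f by rewrite inE negb_and gN orbT.
pose N' := g |: (N :\ f).
have HN' : P N'.
  apply/existsP; exists t; apply/and3P; split.
  - apply/forall_inP => h /setU1P [-> //|].
    rewrite inE => /andP[_ hN]; by move/forall_inP: monoN; apply.
  - by rewrite eq_sym.
  - apply/forallP => x; apply/eqP.
    have := degD x fN; rewrite (nearD _ HN) /N' degU // Hf Hg -/y -/t.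
    have d1 : (w == z) = false by apply/negbTE.
    have d2 : (z == w) = false by rewrite eq_sym; apply/negbTE.
    have d3 : (y == w) = false by apply/negbTE.
    have d4 : (w == y) = false by rewrite eq_sym; apply/negbTE.
    have d5 : (y == z) = false by apply/negbTE.
    have d6 : (z == y) = false by rewrite eq_sym; apply/negbTE.
    have d7 : (t == w) = false by apply/negbTE.
    have d8 : (w == t) = false by rewrite eq_sym; apply/negbTE.
    have d9 : (t == z) = false by apply/negbTE.
    have d10 : (z == t) = false by rewrite eq_sym; apply/negbTE.
    have d11 : (t == y) = false by apply/negbTE.
    have d12 : (y == t) = false by rewrite eq_sym; apply/negbTE.
    case: (eqVneq x z) => [->|xz]; [|case: (eqVneq x y) => [->|xy];
      [|case: (eqVneq x t) => [->|xt]; [|case: (eqVneq x w) => [->|xw]]]];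
      rewrite ?eqxx ?d1 ?d2 ?d3 ?d4 ?d5 ?d6 ?d7 ?d8 ?d9 ?d10 ?d11 ?d12 /= => H; move: H; set dd := deg _ _; clearbody dd; move: dd => n H; clear -H; lia.
have := Hmax N' HN'.
have ->: M :&: N' = g |: (M :&: N).
  apply/setP => h; rewrite !inE.
  case: (eqVneq h g) => [->|hg]; first by rewrite gM.
  case: (eqVneq h f) => [->|hf] /=; first by rewrite (negbTE fM) andbF.
  by [].
rewrite cardsU1 inE (negbTE gN) andbF /=; set k := #|_|; clearbody k => H.
by move: H; rewrite add1n ltnn.
Qed.

Lemma Lpath k : forall u v M p, near M u v -> path (mono_adj ends c) u p ->
  v = last u p -> size p <= k -> False.
Proof.
elim: k => [|k IH] u v M [|w p] Hn.
- by move=> _ /= Ev; move: Hn; rewrite Ev /near eqxx andbF.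
- by [].
- by move=> _ /= Ev; move: Hn; rewrite Ev /near eqxx andbF.
rewrite /= => /andP[Huw Hp] Hv Hs.
case: (eqVneq w u) => [Ewu|wu].
  by apply: (IH u v M p) => //; rewrite -Ewu.
case: (eqVneq w v) => [Ewv|wv].
  by apply: (add_contra Hn); rewrite -Ewv.
apply: (inner Hn (_ : deg M w = 1)); first by rewrite (nearD _ Hn) wu wv.
move=> N z HN; apply/andP; split.
- apply/negP => /eqP Ezu; apply: (IH u w N [:: w]) => //=.
  + by apply: near_sym; rewrite -Ezu.
  + by rewrite Huw.
  + case: p Hp Hv Hs => [|a p] /= _ Ev.
      by rewrite Ev eqxx in wv.
    by rewrite ltnS => H; exact: leq_trans (ltn0Sn _) H.
- apply/negP => /eqP Ezv; apply: (IH w v N p) => //.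
  by rewrite -Ezv.
Qed.

Lemma notc M u v : near M u v -> ~~ connect (mono_adj ends c) u v.
Proof.
move=> Hn; apply/negP => /connectP [p Hp Hv].
exact: (Lpath (k := size p) Hn Hp Hv).
Qed.

Lemma adj_sym : symmetric (mono_adj ends c).
Proof.
move=> x y; apply/existsP/existsP => [] [e /andP[em H]]; exists e;
  by rewrite em orbC.
Qed.

Let csym := sym_connect_sym adj_sym.

Lemma conn_mono e x : monochromatic c e ->
  connect (mono_adj ends c) x (ends e).1 = connect (mono_adj ends c) x (ends e).2.
Proof.
move=> em.
have A : mono_adj ends c (ends e).1 (ends e).2.
  by apply/existsP; exists e; rewrite em -surjective_pairing eqxx.
apply/idP/idP => H.
  exact: connect_trans H (connect1 A).
by apply: connect_trans H (connect1 _); rewrite adj_sym.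
Qed.

Lemma comp_odd x : odd #|[set y | connect (mono_adj ends c) x y]|.
Proof.
have [z [N HN]] := H1 x.
have nz := notc HN.
have monoN : mono N by case/and3P: HN.
set S := [set y | connect (mono_adj ends c) x y].
have Hcl : forall e, e \in N -> ((ends e).1 \in S) = ((ends e).2 \in S).
  move=> e eN; rewrite !inE; apply: conn_mono; by move/forall_inP: monoN; apply.
have Hd : forall y, deg N y = (y \in [set y | (y != x) && (y != z)]).
  by move=> y; rewrite inE (nearD _ HN).
have := parity Hcl Hd.
have ->: S :&: [set y | (y != x) && (y != z)] = S :\ x.
  apply/setP => y; rewrite !inE.
  case: (eqVneq y x) => [->|yx] /=; first by rewrite andbF.
  case: (boolP (connect _ x y)) => //= cy; apply/eqP => yz.
  by rewrite -yz cy in nz.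
move=> H; rewrite (cardsD1 x) inE connect0 add1n /=; exact: H.
Qed.

Lemma cover v0 w0 M0 x : near M0 v0 w0 ->
  connect (mono_adj ends c) v0 x || connect (mono_adj ends c) w0 x.
Proof.
move=> HN; apply/negPn/negP => /norP [h1 h2].
have := comp_odd x.
have monoN : mono M0 by case/and3P: HN.
set S := [set y | connect (mono_adj ends c) x y].
have Hcl : forall e, e \in M0 -> ((ends e).1 \in S) = ((ends e).2 \in S).
  move=> e eN; rewrite !inE; apply: conn_mono; by move/forall_inP: monoN; apply.
have Hd : forall y, deg M0 y = (y \in [set y | (y != v0) && (y != w0)]).
  by move=> y; rewrite inE (nearD _ HN).
have := parity Hcl Hd.
have ->: S :&: [set y | (y != v0) && (y != w0)] = S.
  apply/setP => y; rewrite !inE.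
  case: (boolP (connect _ x y)) => //= cy; apply/andP; split; apply/negP => /eqP Ey.
    by rewrite csym -Ey cy in h1.
  by rewrite csym -Ey cy in h2.
by move/negbTE => ->.
Qed.

Lemma fc u (C : {set V}) : (forall y, (y \in C) = connect (mono_adj ends c) u y) ->
  exists M : {set E}, [forall e in M, monochromatic c e] && perfect_matching_on ends (C :\ u) M.
Proof.
move=> HC.
have [z [N HN]] := H1 u.
have nz := notc HN.
have monoN : mono N by case/and3P: HN.
have zC : z \notin C by rewrite HC.
have Hcl : forall e, e \in N -> ((ends e).1 \in C) = ((ends e).2 \in C).
  move=> e eN; rewrite !HC; apply: conn_mono; by move/forall_inP: monoN; apply.
exists [set e in N | (ends e).1 \in C]; apply/andP; split.
  apply/forall_inP => e; rewrite inE => /andP[eN _]; by move/forall_inP: monoN; apply.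
apply/pm_deg => x; rewrite /deg.
case: (boolP (x \in C)) => xC.
  have ->: [set e in [set e in N | (ends e).1 \in C] | endpoint ends e x] =
           [set e in N | endpoint ends e x].
    apply/setP => e; rewrite !inE.
    case: (boolP (e \in N)) => //= eN.
    case: (boolP (endpoint ends e x)); rewrite ?andbF ?andbT // => ex.
    move: ex; rewrite /endpoint => /orP[/eqP -> // | /eqP ex].
    by rewrite Hcl // ex.
  have := nearD x HN; rewrite /deg => ->; rewrite !inE xC andbT.
  case: (eqVneq x z) => [Exz|xz]; first by rewrite -Exz xC in zC.
  by rewrite andbT.
rewrite inE (negbTE xC) andbF.
apply/eqP; rewrite cards_eq0; apply/eqP/setP => e; rewrite !inE.
apply/negbTE/negP => /andP[/andP[eN e1C] ex].
move: ex; rewrite /endpoint => /orP[/eqP ex|/eqP ex].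
  by rewrite ex (negbTE xC) in e1C.
by rewrite Hcl // ex (negbTE xC) in e1C.
Qed.

End Proof.

Theorem mainTheorem8 (V E : finType) (ends : E -> V * V) (c : E -> bool -> bool) :
  loopless ends ->
  (* standing convention: monochromatic edges are blue at both ends *)
  (forall e, monochromatic c e -> c e false = false) ->
  W_state ends c ->
  exists A B : {set V},
    [/\ A != set0, B != set0, [disjoint A & B] & A :|: B = [set: V]] /\
    (* the connected components of G_m are exactly A and B *)
    (forall x y : V, connect (mono_adj ends c) x y = ((x \in A) == (y \in A))) /\
    mono_factor_critical ends c A /\ mono_factor_critical ends c B.
Proof.
move=> loopl blue [MC [W red]].
set adj := mono_adj ends c.
have noPM : forall M, mono c M -> ~ (forall x, deg ends M x = 1).
  move=> M mM Hd.
  have PM : perfect_matching ends M by apply/pm_deg => x; rewrite Hd inE.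
  have := W M PM.
  have ->: [set e in M | bichromatic c e] = set0.
    apply/setP => e; rewrite !inE; apply/negbTE/negP => /andP[eM eb].
    by move/forall_inP: mM => /(_ e eM); rewrite /monochromatic eb.
  by rewrite cards0.
have H1 : forall w, exists z M, near ends c M w z.
  move=> w; have [e He] := red w.
  have eb : bichromatic c e.
    case: (boolP (bichromatic c e)) => // em; exfalso.
    have cf := blue e em.
    move: em; rewrite /monochromatic /bichromatic negbK => /eqP ct.
    by move: He; rewrite /red_at -ct cf !andbF.
  have [M /andP[PM eM]] := MC e.
  have ew : endpoint ends e w.
    by move: He; rewrite /red_at /endpoint => /orP[/andP[-> _]|/andP[-> _]]; rewrite ?orbT.
  exists (oth ends e w), (M :\ e); apply/and3P; split.
  - apply/forall_inP => f; rewrite inE => /andP[fe fM]; apply/negP => fb.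
    have /eqP/cards1P [g Hg] := W M PM.
    have : e \in [set g] by rewrite -Hg inE eM.
    have : f \in [set g] by rewrite -Hg inE fM.
    rewrite !inE => /eqP Efg /eqP Eeg; by rewrite Efg Eeg inE eqxx in fe.
  - by rewrite eq_sym oth_neq.
  - apply/forallP => x; apply/eqP.
    have := degD ends x eM; move/pm_deg: PM => /(_ x); rewrite inE => ->.
    rewrite (endpoint_oth ew).
    have own := oth_neq loopl ew.
    case: (eqVneq x w) => [->|xw]; [|case: (eqVneq x (oth ends e w)) => [->|xo]];
      rewrite /= ?eqxx ?orbT ?andbF ?(negbTE own) /=;
      set dd := deg _ _ _; clearbody dd; move=> H; clear -H; lia.
have [v0 _] : exists v0 : V, True.
  case: (pickP (@predT V)) => [v0 _|Hn]; first by exists v0.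
  exfalso; apply: (noPM set0); first by apply/forall_inP => e; rewrite inE.
  by move=> x; have := Hn x.
have [w0 [M0 HM0]] := H1 v0.
have nc := notc loopl noPM H1 HM0.
have cov : forall x, connect adj v0 x || connect adj w0 x by move=> x; exact: (cover loopl noPM H1 _ HM0).
have csym := sym_connect_sym (adj_sym ends c).
set A := [set y | connect adj v0 y].
have Hconn : forall x y, connect adj x y = ((x \in A) == (y \in A)).
  move=> x y; rewrite !inE.
  case hx: (connect adj v0 x); case hy: (connect adj v0 y) => /=.
  - by apply: connect_trans hy; rewrite csym.
  - apply/negP => hxy; by rewrite (connect_trans hx hxy) in hy.
  - apply/negP => hxy.
    have : connect adj v0 x by apply: connect_trans hy _; rewrite csym.
    by rewrite hx.
  - have := cov x; have := cov y; rewrite hx hy /= => h2 h1.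
    rewrite csym in h1; exact: connect_trans h1 h2.
exists A, (~: A); split; [|split; [exact: Hconn|split]].
- split.
  + by apply/set0Pn; exists v0; rewrite inE connect0.
  + by apply/set0Pn; exists w0; rewrite !inE; exact: nc.
  + by rewrite -setI_eq0 setICr.
  + by rewrite setUCr.
- move=> u uA; apply: (fc loopl noPM H1) => y.
  by rewrite Hconn uA; case: (y \in A).
- move=> u uB; apply: (fc loopl noPM H1) => y.
  rewrite Hconn; move: uB; rewrite inE => /negbTE ->; rewrite inE.
  by case: (y \in A).
Qed.
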